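(* Let $\hat{\mathcal D}$ be a $\tau$-geometric marked DAG over $X$ with $\tau\ge4$, $\kappa>0$, $q\in\mathcal Q_{\mathcal D}$, $c\in\mathbb R_+^X$, $p=\mathcal A(q,c)$, $Q=\Lambda(q)$, $P=\Lambda(p)$. Then $$\frac{\tau-3}{\kappa\tau}\sum_{uv\in A}\omega_{uv}(Q_{uv}-P_{uv})_+\le\big(2\Delta_0(\mathcal D)+\Delta_I(\hat{\mathcal D})\big)\sum_{x\in X}c_xQ_x+\Psi(q)-\Psi(p).$$
   Context: Let $X$ be a finite set. A DAG over $X$ is a finite directed acyclic graph $\mathcal D=(V,A)$ with $X\subseteq V$, a single source $r$, whose set of sinks is exactly $X$. A flow is $F\in\mathbb R_+^A$ with $\sum_{v:uv\in A}F_{uv}=\sum_{v:vu\in A}F_{vu}$ for $u\in V\setminus(X\cup\{r\})$; $F_u:=\sum_{v:uv\in A}F_{uv}$ for $u\notin X$, $F_x:=\sum_{u:ux\in A}F_{ux}$ for $x\in X$; unit flows have $F_r=1$. $\mathcal P_{\mathcal D}$ is the set of directed paths from $r$ to a sink. A marked DAG is $(\mathcal D,\omega,\theta)$ with $\omega\in\mathbb R_{>0}^A$, $\omega_{uv}>\omega_{vw}$ whenever $uv,vw\in A$, and $\theta\in\mathbb R_{>0}^A$ with $\sum_{v:uv\in A}\theta_{uv}=1$ for $u\in V\setminus X$; it is $\tau$-geometric if $\omega_{uv}\ge\tau\omega_{vw}$ whenever $uv,vw\in A$. $\theta(\gamma):=\prod_{uv\in\gamma}\theta_{uv}$; $\Delta_0(\mathcal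 D)$ is the maximal number of arcs of a path in $\mathcal P_{\mathcal D}$, $\Delta_I(\hat{\mathcal D}):=\max_{\gamma\in\mathcal P_{\mathcal D}}\log(1/\theta(\gamma))$. Put $\eta_{uv}:=1+\log(1/\theta_{uv})$, $\delta_{uv}:=\theta_{uv}/\eta_{uv}$. $\mathcal Q_{\mathcal D}:=\{p\in\mathbb R_+^A:\sum_{v:uv\in A}p_{uv}=1\ \forall u\in V\setminus X\}$; $q^{(u)}:=(q_{uv})_{v:uv\in A}$, $\theta^{(u)}:=(\theta_{uv})_{v:uv\in A}$; $\mathcal Q^{(u)}$ is the probability simplex on $\{v:uv\in A\}$; $\mathbb D^{(u)}(p\|p'):=\frac1\kappa\sum_{v:uv\in A}\frac{\omega_{uv}}{\eta_{uv}}\big[(p_v+\delta_{uv})\log\frac{p_v+\delta_{uv}}{p'_v+\delta_{uv}}+p'_v-p_v\big]$. The step map $\mathcal A(q,c)$ outputs $p\in\mathcal Q_{\mathcal D}$: set $\hat c_x:=c_x$ for $x\in X$; process $u\in V\setminus X$ so that each vertex comes after all its out-neighbours, setting $p^{(u)}:=\arg\min_{p'\in\mathcal Q^{(u)}}\{\mathbb D^{(u)}(p'\|q^{(u)})+\sum_vp'_v\hat c_v\}$ and $\hat c_u:=\sum_vp^{(u)}_v\hat c_v$. $\Lambda(q)$ is the unique unit flow $F$ with $F_{uv}=F_uq_{uv}$ for all $uv\in A$. For $r'\in\mathcal Q_{\mathcal D}$: $\Psi(r'):=-\sum_{u\in V\setminus X}\Lambda(r')_u\,\mathbb D^{(u)}(\theta^{(u)}\|r'^{(u)})$.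 *)

(* Defs.v *)
From HB Require Import structures.
From mathcomp Require Import all_boot all_order all_algebra.
From mathcomp Require Import reals exp.
Set Implicit Arguments. Unset Strict Implicit. Unset Printing Implicit Defensive.
Import Order.TTheory GRing.Theory Num.Theory.
Local Open Scope ring_scope.

Definition is_DAG (V : finType) (A : rel V) (r : V) (X : {set V}) : Prop :=
  [/\ (forall u v, A u v -> ~~ connect A v u),
      (forall v, [forall u, ~~ A u v] = (v == r))
    & (forall v, (v \in X) = [forall w, ~~ A v w])].

Section Defs.
Variables (R : realType) (V : finType) (A : rel V) (r : V) (X : {set V}).

Definition outflow (F : V -> V -> R) u : R := \sum_(v | A u v) F u v.
Definition inflow (F : V -> V -> R) u : R := \sum_(w | A w u) F w u.
Definition Fnode (F : V -> V -> R) u : R :=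
  if u \in X then inflow F u else outflow F u.

Definition is_flow (F : V -> V -> R) : Prop :=
  (forall u v, A u v -> 0 <= F u v) /\
  (forall u, u \notin X -> u != r -> outflow F u = inflow F u).

Definition is_unit_flow F : Prop := is_flow F /\ Fnode F r = 1.

Definition is_Lambda (q F : V -> V -> R) : Prop :=
  is_unit_flow F /\ (forall u v, A u v -> F u v = Fnode F u * q u v).

Definition in_simplex u (p : V -> R) : Prop :=
  (forall v, A u v -> 0 <= p v) /\ \sum_(v | A u v) p v = 1.
Definition in_QD (p : V -> V -> R) : Prop :=
  forall u, u \notin X -> in_simplex u (p u).

Definition is_marked (omega theta : V -> V -> R) : Prop :=
  [/\ (forall u v, A u v -> 0 < omega u v),
      (forall u v w, A u v -> A v w -> omega v w < omega u v),
      (forall u v, A u v -> 0 < theta u v)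
    & (forall u, u \notin X -> \sum_(v | A u v) theta u v = 1)].
Definition is_geometric (tau : R) (omega : V -> V -> R) : Prop :=
  forall u v w, A u v -> A v w -> tau * omega v w <= omega u v.

(* paths from r to a sink, given as the sequence of vertices after r *)
Definition is_rpath (s : seq V) : bool := path A r s && (last r s \in X).
Definition theta_path (theta : V -> V -> R) (s : seq V) : R :=
  \prod_(e <- zip (r :: s) s) theta e.1 e.2.
(* every r-path in a DAG visits distinct vertices, so it has < #|V| arcs *)
Definition Delta0 : nat :=
  \max_(k < #|V|) \max_(t : (nat_of_ord k).-tuple V | is_rpath t) (nat_of_ord k).
Definition DeltaI (theta : V -> V -> R) : R :=
  \big[Num.max/0]_(k < #|V|)
     \big[Num.max/0]_(t : (nat_of_ord k).-tuple V | is_rpath t)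
        ln (1 / theta_path theta t).

Variables (omega theta : V -> V -> R) (kappa : R).
Definition eta u v : R := 1 + ln (1 / theta u v).
Definition delta u v : R := theta u v / eta u v.

Definition Div u (p p' : V -> R) : R :=
  kappa^-1 * \sum_(v | A u v) (omega u v / eta u v) *
    ((p v + delta u v) * ln ((p v + delta u v) / (p' v + delta u v)) + p' v - p v).

Definition is_step (q : V -> V -> R) (c : V -> R) (p : V -> V -> R) : Prop :=
  in_QD p /\
  exists chat : V -> R,
    [/\ (forall x, x \in X -> chat x = c x),
        (forall u, u \notin X -> chat u = \sum_(v | A u v) p u v * chat v)
      & (forall u, u \notin X -> forall p' : V -> R, in_simplex u p' ->
           Div u (p u) (q u) + \sum_(v | A u v) p u v * chat v
           <= Div u p' (q u) + \sum_(v | A u v) p' v * chat v)].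

(* Psi(r'), with F = Lambda(r') *)
Definition Psi (F r' : V -> V -> R) : R :=
  - \sum_(u | u \notin X) Fnode F u * Div u (theta u) (r' u).

End Defs.

(* Main.v *)
Set Warnings "-notation-overridden,-ambiguous-paths".
Require Import Defs.
From HB Require Import structures.
From mathcomp Require Import all_boot all_order all_algebra.
From mathcomp Require Import reals exp.
From mathcomp Require Import ring lra.
Set Implicit Arguments. Unset Strict Implicit. Unset Printing Implicit Defensive.
Import Order.TTheory GRing.Theory Num.Theory.
Local Open Scope ring_scope.
Section RealL.
Variable R : realType.

Lemma ln_le_sub1 (x : R) : 0 < x -> ln x <= x - 1.
Proof.
move=> x0; have := @le_ln1Dx R (x - 1).
have -> : 1 + (x - 1) = x by ring.
by apply; lra.
Qed.

Lemma ln_divE (a b : R) : 0 < a -> 0 < b -> ln (a / b) = ln a - ln b.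
Proof. by move=> a0 b0; rewrite ln_div. Qed.

Lemma ent_ge (a b : R) : 0 < a -> 0 < b -> a - b <= a * ln (a / b).
Proof.
move=> a0 b0.
have h := ln_le_sub1 (divr_gt0 b0 a0).
rewrite !ln_divE // in h *.
have h2 : a * (ln b - ln a) <= a * (b / a - 1) by rewrite ler_wpM2l // ltW.
have e : a * (b / a - 1) = b - a by field; rewrite gt_eqF.
nra.
Qed.

Lemma ent_le (a b : R) : 0 < a -> 0 < b -> a * ln (a / b) + b - a <= (a - b) ^+ 2 / b.
Proof.
move=> a0 b0.
have h := ln_le_sub1 (divr_gt0 a0 b0).
have h2 : a * ln (a / b) <= a * (a / b - 1) by rewrite ler_wpM2l // ltW.
have -> : (a - b) ^+ 2 / b = a * (a / b - 1) + b - a by field; rewrite gt_eqF.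
lra.
Qed.
End RealL.
Section DivSec.
Variables (R : realType) (V : finType) (A : rel V).
Variables (omega theta : V -> V -> R) (kappa : R).
Hypothesis kappa_gt0 : 0 < kappa.
Hypothesis omega_gt0 : forall u v, A u v -> 0 < omega u v.
Hypothesis theta_gt0 : forall u v, A u v -> 0 < theta u v.
Hypothesis theta_le1 : forall u v, A u v -> theta u v <= 1.

Local Notation et := (Defs.eta theta).
Local Notation dl := (delta theta).
Local Notation Tm u v x y :=
  (omega u v / Defs.eta theta u v *
    ((x + delta theta u v) * ln ((x + delta theta u v) / (y + delta theta u v)) + y - x)).

Lemma eta_ge1 u v : A u v -> 1 <= et u v.
Proof.
move=> h; have : 0 <= ln (1 / theta u v).
  by apply: ln_ge0; rewrite div1r invf_ge1 ?theta_gt0 ?theta_le1.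
rewrite /Defs.eta; lra.
Qed.

Lemma eta_gt0 u v : A u v -> 0 < et u v.
Proof. by move=> h; apply: lt_le_trans (eta_ge1 h). Qed.

Lemma delta_gt0 u v : A u v -> 0 < dl u v.
Proof. by move=> h; rewrite /delta divr_gt0 ?theta_gt0 ?eta_gt0. Qed.

Lemma delta_eta u v : A u v -> dl u v * et u v = theta u v.
Proof.
move=> h; rewrite /delta mulrAC -mulrA mulfV ?mulr1 //.
by rewrite gt_eqF // eta_gt0.
Qed.

Lemma w_ge0 u v : A u v -> 0 <= omega u v / et u v.
Proof. by move=> h; rewrite ltW // divr_gt0 ?omega_gt0 ?eta_gt0. Qed.

Lemma w_le u v : A u v -> omega u v / et u v <= omega u v.
Proof.
move=> h; rewrite ler_pdivrMr ?eta_gt0 //.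
by rewrite ler_peMr ?eta_ge1 // ltW // omega_gt0.
Qed.

Lemma Tm_ge0 u v x y : A u v -> 0 <= x -> 0 <= y -> 0 <= Tm u v x y.
Proof.
move=> h x0 y0; apply: mulr_ge0; first exact: w_ge0.
have d0 := delta_gt0 h.
have := ent_ge (a := x + dl u v) (b := y + dl u v); lra.
Qed.

Lemma Div_ge0 u x y : (forall v, A u v -> 0 <= x v) -> (forall v, A u v -> 0 <= y v) ->
  0 <= Div A omega theta kappa u x y.
Proof.
move=> hx hy; rewrite /Div; apply: mulr_ge0; first by rewrite invr_ge0 ltW.
by apply: sumr_ge0 => v h; apply: Tm_ge0 => //; [apply: hx | apply: hy].
Qed.

Lemma Div_xx u x : (forall v, A u v -> 0 <= x v) -> Div A omega theta kappa u x x = 0.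
Proof.
move=> hx; rewrite /Div big1 ?mulr0 // => v h.
have d0 := delta_gt0 h; have x0 := hx v h.
rewrite divff ?ln1; last by rewrite gt_eqF //; lra.
by rewrite mulr0 add0r subrr mulr0.
Qed.

Lemma Div_theta_le u y : (forall v, A u v -> 0 <= y v) ->
  Div A omega theta kappa u (theta u) y <=
  kappa^-1 * \sum_(v | A u v) omega u v * (theta u v + y v).
Proof.
move=> hy; rewrite /Div ler_pM2l ?invr_gt0 //.
apply: ler_sum => v h.
have d0 := delta_gt0 h; have y0 := hy v h; have t0 := theta_gt0 h.
have e0 := eta_gt0 h; have e1 := eta_ge1 h; have de := delta_eta h.
have o0 := omega_gt0 h.
rewrite ln_divE; [|lra|lra].
have l1 : ln (delta theta u v) <= ln (y v + delta theta u v).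
  by rewrite ler_ln ?posrE //; lra.
have l2 : ln (theta u v + delta theta u v) - ln (delta theta u v) <= Defs.eta theta u v.
  rewrite -ln_divE //; last by lra.
  have -> : (theta u v + delta theta u v) / delta theta u v = 1 + Defs.eta theta u v.
    rewrite -de; field; rewrite gt_eqF //.
  by apply: le_ln1Dx; lra.
set L := ln (theta u v + _) - ln (y v + _).
have hL : L <= Defs.eta theta u v by rewrite /L; lra.
have step : (theta u v + delta theta u v) * L <= (theta u v + delta theta u v) * Defs.eta theta u v.
  by rewrite ler_wpM2l //; lra.
have w0 := w_ge0 h.
apply: le_trans (_ : omega u v / Defs.eta theta u v * ((theta u v + delta theta u v) * Defs.eta theta u v + y v - theta u v) <= _).
  by rewrite ler_wpM2l //; lra.
have -> : omega u v / Defs.eta theta u v * ((theta u v + delta theta u v) * Defs.eta theta u v + y v - theta u v)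
   = omega u v * theta u v + omega u v / Defs.eta theta u v * y v.
  rewrite -de; field; rewrite gt_eqF //.
have := w_le h; nra.
Qed.


Local Notation W u v := (omega u v / Defs.eta theta u v).
Local Notation D u v := (delta theta u v).

Lemma Div_diff u pf qf :
  (forall v, A u v -> 0 <= pf v) -> (forall v, A u v -> 0 <= qf v) ->
  kappa * (Div A omega theta kappa u (theta u) pf - Div A omega theta kappa u (theta u) qf)
  = \sum_(v | A u v) W u v * ((theta u v + D u v) * (ln (qf v + D u v) - ln (pf v + D u v))
      + pf v - qf v).
Proof.
move=> hp hq; rewrite /Div -mulrBr mulrA mulfV ?mul1r ?gt_eqF // -sumrB.
apply: eq_bigr => v h.
have d0 := delta_gt0 h; have t0 := theta_gt0 h; have p0 := hp v h; have q0 := hq v h.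
rewrite !ln_divE; [|lra|lra|lra|lra]; ring.
Qed.

Lemma Tm_step u v a b c : A u v -> 0 <= a -> 0 <= b -> 0 <= c ->
  Tm u v a c - Tm u v b c <=
  W u v * ((a - b) ^+ 2 / (b + D u v)) + (a - b) * (W u v * (ln (b + D u v) - ln (c + D u v))).
Proof.
move=> h a0 b0 c0; have d0 := delta_gt0 h; have w0 := w_ge0 h.
have el := ent_le (a := a + D u v) (b := b + D u v).
rewrite ln_divE in el; [|lra|lra].
have ed : a + D u v - (b + D u v) = a - b by ring.
rewrite ed in el.
set E := (a + D u v) * (ln (a + D u v) - ln (b + D u v)) + (b + D u v) - (a + D u v) in el.
have e1 : E <= (a - b) ^+ 2 / (b + D u v) by apply: el; lra.
have e2 : W u v * E <= W u v * ((a - b) ^+ 2 / (b + D u v)) by rewrite ler_wpM2l.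
suff -> : Tm u v a c - Tm u v b c = W u v * E +
   (a - b) * (W u v * (ln (b + D u v) - ln (c + D u v))) by lra.
rewrite /E !ln_divE; [|lra|lra|lra|lra]; ring.
Qed.

Lemma VI u pu qu ch :
  (forall v, A u v -> 0 <= pu v) -> (forall v, A u v -> 0 <= qu v) ->
  \sum_(v | A u v) pu v = 1 ->
  (forall p', in_simplex A u p' ->
     Div A omega theta kappa u pu qu + \sum_(v | A u v) pu v * ch v
     <= Div A omega theta kappa u p' qu + \sum_(v | A u v) p' v * ch v) ->
  forall p', in_simplex A u p' ->
  0 <= \sum_(v | A u v) (p' v - pu v) *
         (kappa * ch v - W u v * (ln (qu v + D u v) - ln (pu v + D u v))).
Proof.
move=> hp hq hs hmin p' [hp' hs'].
set G := \sum_(v | A u v) _.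
set C := \sum_(v | A u v) W u v * ((p' v - pu v) ^+ 2 / (pu v + D u v)).
have C0 : 0 <= C.
  apply: sumr_ge0 => v h; apply: mulr_ge0; first exact: w_ge0.
  have d0 := delta_gt0 h; have := hp v h => p0.
  by apply: divr_ge0; [apply: sqr_ge0 | lra].
set S := \sum_(v | A u v) (p' v - pu v) * ch v.
set S2 := \sum_(v | A u v) (p' v - pu v) *
              (W u v * (ln (pu v + D u v) - ln (qu v + D u v))).
have EG : G = kappa * S + S2.
  rewrite /G /S /S2 mulr_sumr -big_split; apply: eq_bigr => v _ /=.
  have -> : ln (qu v + D u v) - ln (pu v + D u v) = - (ln (pu v + D u v) - ln (qu v + D u v)) by ring.
  ring.
have key : forall t, 0 < t -> t <= 1 -> 0 <= t * G + t ^+ 2 * C.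
  move=> t t0 t1.
  pose xt v := pu v + t * (p' v - pu v).
  have hxt : in_simplex A u xt.
    split.
      move=> v h; rewrite /xt; have := hp v h; have := hp' v h; nra.
    by rewrite big_split /= -mulr_sumr sumrB hs hs' subrr mulr0 addr0.
  have hm := hmin xt hxt.
  have E1 : kappa * (Div A omega theta kappa u xt qu - Div A omega theta kappa u pu qu)
             <= t ^+ 2 * C + t * S2.
    rewrite /Div -mulrBr mulrA mulfV ?mul1r ?gt_eqF // -sumrB /C /S2 !mulr_sumr -big_split.
    apply: ler_sum => v h /=.
    have := Tm_step (a := xt v) (b := pu v) (c := qu v) h.
    have p0 := hp v h; have p0' := hp' v h; have q0 := hq v h.
    rewrite /xt; have -> : pu v + t * (p' v - pu v) - pu v = t * (p' v - pu v) by ring.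
    move=> H; apply: le_trans (H _ _ _) _ => //; first by nra.
    by rewrite le_eqVlt; apply/orP; left; apply/eqP; ring.
  have E2 : \sum_(v | A u v) xt v * ch v - \sum_(v | A u v) pu v * ch v = t * S.
    by rewrite -sumrB /S mulr_sumr; apply: eq_bigr => v _; rewrite /xt; ring.
  have hm2 : 0 <= kappa * (Div A omega theta kappa u xt qu - Div A omega theta kappa u pu qu)
              + kappa * (t * S).
    rewrite -E2 -mulrDr; apply: mulr_ge0; first exact: ltW.
    lra.
  rewrite EG; nra.
rewrite leNgt; apply/negP => Gn.
pose Dd := 2 * C - G.
have D0 : 0 < Dd by rewrite /Dd; lra.
pose t := - G / Dd.
have t0 : 0 < t by rewrite /t divr_gt0 //; lra.
have t1 : t <= 1 by rewrite /t ler_pdivrMr // mul1r /Dd; lra.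
have := key t t0 t1.
have -> : t * G + t ^+ 2 * C = - (G ^+ 2 * (C - G) / Dd ^+ 2).
  rewrite /t /Dd; field; rewrite gt_eqF //.
rewrite oppr_ge0 leNgt => /negP; apply.
apply: divr_gt0; last by rewrite expr2; nra.
by apply: mulr_gt0; [rewrite expr2; nra | lra].
Qed.


Lemma local_ineq u pu qu ch :
  (forall v, A u v -> 0 <= pu v) -> (forall v, A u v -> 0 <= qu v) ->
  \sum_(v | A u v) pu v = 1 -> \sum_(v | A u v) qu v = 1 ->
  \sum_(v | A u v) theta u v = 1 ->
  (forall v, A u v -> 0 <= ch v) ->
  (forall p', in_simplex A u p' ->
     Div A omega theta kappa u pu qu + \sum_(v | A u v) pu v * ch v
     <= Div A omega theta kappa u p' qu + \sum_(v | A u v) p' v * ch v) ->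
  \sum_(v | A u v) omega u v * Num.max 0 (qu v - pu v)
  <= kappa * (Div A omega theta kappa u (theta u) pu - Div A omega theta kappa u (theta u) qu)
     + kappa * \sum_(v | A u v) qu v * (Defs.eta theta u v + 1) * ch v.
Proof.
move=> hp hq hsp hsq hst hch hmin.
have vi := VI hp hq hsp hmin.
pose h v := kappa * ch v - W u v * (ln (qu v + D u v) - ln (pu v + D u v)).
have [v1 hv1 pv1] : exists2 v, A u v & 0 < pu v.
  case: (pickP (fun v => A u v && (0 < pu v))) => [v1 /andP[h1 h2] | none]; first by exists v1.
  exfalso; move: hsp; rewrite big1 => [|v hv]; first by move/eqP; rewrite eq_sym oner_eq0.
  apply/eqP; rewrite eq_le hp // andbT leNgt; move: (none v); by rewrite hv /= => ->.
case: (arg_minP h hv1) => vm hvm hmn.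
set al := h vm.
pose e v : R := if v == vm then 1 else 0.
have he : in_simplex A u e.
  split; first by move=> v _; rewrite /e; case: ifP => _; [exact: ler01 | exact: lexx].
  rewrite (bigD1 vm) //= /e eqxx big1 ?addr0 // => v /andP[_ /negbTE ->] //.
have vie : 0 <= \sum_(v | A u v) (e v - pu v) * h v := vi e he.
have Se : \sum_(v | A u v) e v * h v = al.
  rewrite (bigD1 vm) //= /e eqxx mul1r big1 ?addr0 // => v /andP[_ /negbTE ->]; by rewrite mul0r.
have Eh : \sum_(v | A u v) (e v - pu v) * h v = al - \sum_(v | A u v) pu v * h v.
  by rewrite -Se -sumrB; apply: eq_bigr => v _; ring.
have Sa : \sum_(v | A u v) pu v * (h v - al) = 0.
  apply/le_anti/andP; split.
    have -> : \sum_(v | A u v) pu v * (h v - al) = \sum_(v | A u v) pu v * h v - al.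
      rewrite -[X in _ - X]mulr1 -hsp mulr_sumr -sumrB; apply: eq_bigr => v _; ring.
    lra.
  apply: sumr_ge0 => v hv; apply: mulr_ge0; first exact: hp.
  by rewrite subr_ge0; apply: hmn.
have heq : forall v, A u v -> 0 < pu v -> h v = al.
  move=> v hv pv.
  have hnn : forall w, A u w -> 0 <= pu w * (h w - al).
    by move=> w hw; apply: mulr_ge0; [apply: hp | rewrite subr_ge0; apply: hmn].
  have := psumr_eq0P hnn Sa hv => /= /eqP.
  rewrite mulf_eq0 => /orP[/eqP pz|]; first by move: pv; rewrite pz ltxx.
  by rewrite subr_eq0 => /eqP.
have al0 : 0 <= al.
  rewrite leNgt; apply/negP => an.
  have str : forall v, A u v -> 0 < pu v -> pu v < qu v.
    move=> v hv pv; have := heq v hv pv; rewrite /h => hh.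
    have d0 := delta_gt0 hv; have q0 := hq v hv.
    have w0 : 0 < W u v by rewrite divr_gt0 ?omega_gt0 ?eta_gt0.
    have c0 := hch v hv.
    have : 0 < W u v * (ln (qu v + D u v) - ln (pu v + D u v)).
      have : 0 <= kappa * ch v by apply: mulr_ge0 => //; exact: ltW.
      lra.
    rewrite pmulr_rgt0 // subr_gt0 ltr_ln ?posrE; [lra|lra|lra].
  have wk : forall v, A u v -> 0 <= qu v - pu v.
    move=> v hv; have := hp v hv; rewrite le_eqVlt => /orP[/eqP <-|pv].
      by rewrite subr0; apply: hq.
    by rewrite subr_ge0 ltW // str.
  have S0 : \sum_(v | A u v) (qu v - pu v) = 0 by rewrite sumrB hsq hsp subrr.
  have := psumr_eq0P wk S0 hv1; have := str v1 hv1 pv1; lra.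
rewrite Div_diff //.
have perv : forall v, A u v ->
   omega u v * Num.max 0 (qu v - pu v) <=
   W u v * ((theta u v + D u v) * (ln (qu v + D u v) - ln (pu v + D u v)) + pu v - qu v)
   + kappa * (qu v * (Defs.eta theta u v + 1) * ch v) + al * (theta u v - qu v).
  move=> v hv.
  have d0 := delta_gt0 hv; have q0 := hq v hv; have p0 := hp v hv; have c0 := hch v hv.
  have w0 := w_ge0 hv; have e1 := eta_ge1 hv; have De := delta_eta hv.
  have t0 := theta_gt0 hv.
  have Wd : omega u v = W u v * Defs.eta theta u v.
    by rewrite mulrAC -mulrA mulfV ?mulr1 // gt_eqF // eta_gt0.
  set L := ln (qu v + D u v) - ln (pu v + D u v).
  have hqp : qu v - pu v <= (qu v + D u v) * L.
    have := ent_ge (a := qu v + D u v) (b := pu v + D u v).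
    rewrite ln_divE; [|lra|lra].
    have -> : qu v + D u v - (pu v + D u v) = qu v - pu v by ring.
    by apply; lra.
  have hmv := hmn v hv; rewrite /= -/al in hmv.
  have hWL : W u v * L <= kappa * ch v - al by rewrite /h in hmv; rewrite /L; lra.
  have kc : 0 <= kappa * ch v by apply: mulr_ge0 => //; exact: ltW.
  rewrite -De in Wd *.
  have hWL2 : forall v', v' = v -> 0 < pu v' -> W u v * L = kappa * ch v - al.
    move=> v' -> pv; have := heq v hv pv; rewrite /h -/L; lra.
  set w := W u v in w0 Wd hWL hWL2 *.
  rewrite {1}Wd.
  case: (lerP (pu v) (qu v)) => hpq.
    rewrite max_r ?subr_ge0 //.
    have s1 : w * Defs.eta theta u v * (qu v - pu v) <=
              w * Defs.eta theta u v * ((qu v + D u v) * L).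
      by rewrite ler_wpM2l // mulr_ge0 //; lra.
    have s2 : w * (qu v - pu v) <= w * ((qu v + D u v) * L) by rewrite ler_wpM2l.
    have s4 : w * L * (qu v * (Defs.eta theta u v + 1)) <=
              (kappa * ch v - al) * (qu v * (Defs.eta theta u v + 1)).
      by rewrite ler_wpM2r // mulr_ge0 //; lra.
    have s5 : 0 <= al * (D u v * Defs.eta theta u v + qu v * Defs.eta theta u v).
      by apply: mulr_ge0 => //; apply: addr_ge0; apply: mulr_ge0; lra.
    lra.
  rewrite max_l; last by rewrite subr_le0 ltW.
  rewrite mulr0.
  have pv : 0 < pu v by lra.
  have hWL' := hWL2 v erefl pv.
  have s2 : w * (qu v - pu v) <= w * ((qu v + D u v) * L) by rewrite ler_wpM2l.
  have s6 : 0 <= kappa * ch v * (D u v * Defs.eta theta u v) by apply: mulr_ge0 => //; nra.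
  have s7 : 0 <= kappa * ch v * (qu v * Defs.eta theta u v) by apply: mulr_ge0 => //; nra.
  have f1 : w * L * (D u v * Defs.eta theta u v + D u v) =
            (kappa * ch v - al) * (D u v * Defs.eta theta u v + D u v) by rewrite hWL'.
  have f2 : w * L * (qu v + D u v) = (kappa * ch v - al) * (qu v + D u v) by rewrite hWL'.
  lra.
apply: le_trans; first by apply: ler_sum => v hv; apply: perv.
rewrite !big_split /= -!mulr_sumr sumrB hst hsq subrr mulr0 addr0.
by apply: lexx.
Qed.

End DivSec.
From mathcomp Require Import zify.

Section DagSec.
Variables (R : realType) (V : finType) (A : rel V) (r : V) (X : {set V}).
Hypothesis acyc : forall u v, A u v -> ~~ connect A v u.
Hypothesis src : forall v, [forall u, ~~ A u v] = (v == r).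
Local Open Scope nat_scope.

Lemma dag_ind_down (P : V -> Prop) :
  (forall u, (forall v, A u v -> P v) -> P u) -> forall u, P u.
Proof.
move=> H.
suff: forall n u, #|[set w | connect A u w]| <= n -> P u by move=> h u; exact: (h _ u (leqnn _)).
elim=> [|n IH] u hu.
  have : 0 < #|[set w | connect A u w]| by apply/card_gt0P; exists u; rewrite inE connect0.
  lia.
apply: H => v huv; apply: IH.
have sub : [set w | connect A v w] \proper [set w | connect A u w].
  apply/properP; split.
    by apply/subsetP => w; rewrite !inE => cvw; apply: connect_trans (connect1 huv) cvw.
  by exists u; rewrite !inE ?connect0 // (negbTE (acyc huv)).
have := proper_card sub; lia.
Qed.

Lemma dag_ind_up (P : V -> Prop) :
  (forall v, (forall w, A w v -> P w) -> P v) -> forall v, P v.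
Proof.
move=> H.
suff: forall n v, #|[set w | connect A w v]| <= n -> P v by move=> h v; exact: (h _ v (leqnn _)).
elim=> [|n IH] v hv.
  have : 0 < #|[set w | connect A w v]| by apply/card_gt0P; exists v; rewrite inE connect0.
  lia.
apply: H => w hwv; apply: IH.
have sub : [set x | connect A x w] \proper [set x | connect A x v].
  apply/properP; split.
    by apply/subsetP => x; rewrite !inE => cxw; apply: connect_trans cxw (connect1 hwv).
  by exists v; rewrite !inE ?connect0 // (negbTE (acyc hwv)).
have := proper_card sub; lia.
Qed.

Lemma has_pred v : v != r -> exists w, A w v.
Proof.
move=> hv; move: (src v); rewrite (negbTE hv) => /negbT /forallPn [w].
by rewrite negbK => h; exists w.
Qed.

Lemma no_in_r w : ~~ A w r.
Proof. by move: (src r); rewrite eqxx => /forallP. Qed.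

Lemma reach v : connect A r v.
Proof.
elim/dag_ind_up: v => v IH.
case: (eqVneq v r) => [->|hv]; first exact: connect0.
have [w hw] := has_pred hv.
exact: connect_trans (IH w hw) (connect1 hw).
Qed.

Lemma path_uniq x s : path A x s -> uniq (x :: s).
Proof.
elim: s x => [|y s IH] x //= /andP[hxy hp].
have := IH y hp; rewrite /= => ->; rewrite andbT.
apply/negP => hin.
have := path_connect hp hin; rewrite (negbTE (acyc hxy)).
by [].
Qed.

Lemma path_size x s : path A x s -> size s < #|V|.
Proof.
move=> hp; have u := path_uniq hp.
have := max_card (mem (x :: s)); rewrite (card_uniqP u) /=.
by [].
Qed.

End DagSec.

Fixpoint Wp (R : realType) (V : finType) (theta : V -> V -> R) (x : V) (s : seq V) : R :=
  if s is y :: s' then Defs.eta theta x y + 1 + Wp theta y s' else 0.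

Definition dd (R : realType) (V : finType) (A : rel V) (r : V) (theta : V -> V -> R) (v : V) : R :=
  \big[Num.max/0]_(k < #|V|)
     \big[Num.max/0]_(t : (nat_of_ord k).-tuple V | path A r t && (last r t == v)) Wp theta r t.

Section DdSec.
Variables (R : realType) (V : finType) (A : rel V) (r : V) (X : {set V}).
Variables (theta : V -> V -> R).
Hypothesis acyc : forall u v, A u v -> ~~ connect A v u.
Hypothesis src : forall v, [forall u, ~~ A u v] = (v == r).
Hypothesis theta_gt0 : forall u v, A u v -> 0 < theta u v.
Hypothesis eta1 : forall u v, A u v -> 1 <= Defs.eta theta u v.

Lemma Wp_rcons x s v : Wp theta x (rcons s v) = Wp theta x s + (Defs.eta theta (last x s) v + 1).
Proof.
elim: s x => [|y s IH] x /=; first by rewrite addr0 add0r.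
by rewrite IH addrA.
Qed.

Lemma Wp_ge0 x s : path A x s -> 0 <= Wp theta x s.
Proof.
elim: s x => [|y s IH] x //= /andP[h hp].
have := IH y hp; have := eta1 h; lra.
Qed.

Lemma prod_gt0 x s : path A x s -> 0 < \prod_(e <- zip (x :: s) s) theta e.1 e.2.
Proof.
elim: s x => [|y s IH] x /=; first by rewrite big_nil ltr01.
move=> /andP[h hp]; rewrite big_cons /=.
by apply: mulr_gt0; [apply: theta_gt0 | apply: IH].
Qed.

Lemma Wp_zip x s : path A x s ->
  Wp theta x s = 2 * (size s)%:R + ln (1 / \prod_(e <- zip (x :: s) s) theta e.1 e.2).
Proof.
elim: s x => [|y s IH] x /=; first by rewrite big_nil divr1 ln1 mulr0 addr0.
move=> /andP[h hp]; rewrite big_cons /= IH //.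
have t0 := theta_gt0 h; have P0 := prod_gt0 hp.
have -> : 1 / (theta x y * \prod_(e <- zip (y :: s) s) theta e.1 e.2) =
   (1 / theta x y) * (1 / \prod_(e <- zip (y :: s) s) theta e.1 e.2).
  by field; apply/andP; split; rewrite gt_eqF.
have a1 : 0 < 1 / theta x y by rewrite divr_gt0.
have a2 : 0 < 1 / \prod_(e <- zip (y :: s) s) theta e.1 e.2 by rewrite divr_gt0.
have e3 : ln (1 / theta x y * (1 / \prod_(e <- zip (y :: s) s) theta e.1 e.2)) =
   ln (1 / theta x y) + ln (1 / \prod_(e <- zip (y :: s) s) theta e.1 e.2).
  by rewrite lnM // posrE.
have e4 : ((size s).+1)%:R = (size s)%:R + 1 :> R by rewrite natr1.
rewrite e3 e4 /Defs.eta.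
ring.
Qed.

Lemma dd_ge0 v : 0 <= dd A r theta v.
Proof. exact: bigmax_ge_id. Qed.

Lemma dd_ge t v : path A r t -> last r t = v -> Wp theta r t <= dd A r theta v.
Proof.
move=> hp hl.
have hk := path_size acyc hp.
apply: (bigmax_sup (Ordinal hk)) => //.
apply: (bigmax_sup (in_tuple t)) => //=.
by rewrite hp hl eqxx.
Qed.

Lemma dd_arc u v : A u v -> dd A r theta u + (Defs.eta theta u v + 1) <= dd A r theta v.
Proof.
move=> huv; rewrite -lerBrDr.
apply: bigmax_le => [|k _].
  have := reach acyc src u => /connectP [s hs hl].
  have hp' : path A r (rcons s v) by rewrite rcons_path hs -hl huv.
  have := dd_ge hp' (last_rcons _ _ _); rewrite Wp_rcons -hl.
  have := Wp_ge0 hs; lra.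
apply: bigmax_le => [|t /andP[hp /eqP hl]].
  have := reach acyc src u => /connectP [s hs hl].
  have hp' : path A r (rcons s v) by rewrite rcons_path hs -hl huv.
  have := dd_ge hp' (last_rcons _ _ _); rewrite Wp_rcons -hl.
  have := Wp_ge0 hs; lra.
have hp' : path A r (rcons t v) by rewrite rcons_path hp hl huv.
have := dd_ge hp' (last_rcons _ _ _); rewrite Wp_rcons hl; lra.
Qed.

Lemma dd_sink x : x \in X -> dd A r theta x <= 2 * (Delta0 A r X)%:R + DeltaI A r X theta.
Proof.
move=> hx.
have DI0 : 0 <= DeltaI A r X theta by apply: bigmax_ge_id.
apply: bigmax_le => [|k _]; first by apply: addr_ge0 => //; apply: mulr_ge0.
apply: bigmax_le => [|t /andP[hp /eqP hl]]; first by apply: addr_ge0 => //; apply: mulr_ge0.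
have hr : is_rpath A r X t by rewrite /is_rpath hp hl hx.
rewrite Wp_zip // size_tuple.
have h1 : (nat_of_ord k <= Delta0 A r X)%N.
  rewrite /Delta0.
  apply: leq_trans (@leq_bigmax _ (fun k0 : 'I_#|V| =>
     \max_(t0 : (nat_of_ord k0).-tuple V | is_rpath A r X t0) nat_of_ord k0) k).
  exact: (@leq_bigmax_cond _ (fun t0 : (nat_of_ord k).-tuple V => is_rpath A r X t0)
            (fun _ => nat_of_ord k) t hr).
have h2 : ln (1 / theta_path r theta t) <= DeltaI A r X theta.
  apply: (bigmax_sup k) => //.
  exact: (bigmax_sup t).
have h3 : (nat_of_ord k)%:R <= (Delta0 A r X)%:R :> R by rewrite ler_nat.
rewrite /theta_path in h2; lra.
Qed.

End DdSec.
Section Main.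
Variables (R : realType) (V : finType) (A : rel V) (r : V) (X : {set V}).
Variables (omega theta : V -> V -> R) (tau kappa : R).
Variables (q : V -> V -> R) (c : V -> R) (p Q P : V -> V -> R) (ch : V -> R).
Hypothesis acyc : forall u v, A u v -> ~~ connect A v u.
Hypothesis src : forall v, [forall u, ~~ A u v] = (v == r).
Hypothesis sinks : forall v, (v \in X) = [forall w, ~~ A v w].
Hypothesis om_gt0 : forall u v, A u v -> 0 < omega u v.
Hypothesis th_gt0 : forall u v, A u v -> 0 < theta u v.
Hypothesis th_sum : forall u, u \notin X -> \sum_(v | A u v) theta u v = 1.
Hypothesis geo : forall u v w, A u v -> A v w -> tau * omega v w <= omega u v.
Hypothesis tau4 : 4 <= tau.
Hypothesis kap0 : 0 < kappa.
Hypothesis hqQD : in_QD A X q.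
Hypothesis hpQD : in_QD A X p.
Hypothesis hc : forall x, x \in X -> 0 <= c x.
Hypothesis hchX : forall x, x \in X -> ch x = c x.
Hypothesis hchU : forall u, u \notin X -> ch u = \sum_(v | A u v) p u v * ch v.
Hypothesis hmin : forall u, u \notin X -> forall p' : V -> R, in_simplex A u p' ->
           Div A omega theta kappa u (p u) (q u) + \sum_(v | A u v) p u v * ch v
           <= Div A omega theta kappa u p' (q u) + \sum_(v | A u v) p' v * ch v.
Hypothesis hQ : is_Lambda A r X q Q.
Hypothesis hP : is_Lambda A r X p P.

Lemma arcX u v : A u v -> u \notin X.
Proof. by move=> h; rewrite sinks; apply/negP => /forallP /(_ v); rewrite h. Qed.

Lemma noarcX u v : u \in X -> A u v = false.
Proof. by move=> hu; apply/negbTE/negP => h; move: (arcX h); rewrite hu. Qed.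

Lemma th_le1 u v : A u v -> theta u v <= 1.
Proof.
move=> h; have := th_sum (arcX h); rewrite (bigD1 v) //=.
have : 0 <= \sum_(i | A u i && (i != v)) theta u i.
  by apply: sumr_ge0 => i /andP[hi _]; apply: ltW; apply: th_gt0.
lra.
Qed.

Lemma eta1 u v : A u v -> 1 <= Defs.eta theta u v.
Proof. move=> h; exact: (eta_ge1 th_gt0 th_le1 h). Qed.

Lemma sum_nX (g : V -> V -> R) :
  \sum_(u | u \notin X) \sum_(v | A u v) g u v = \sum_u \sum_(v | A u v) g u v.
Proof.
rewrite [RHS](bigID (fun u => u \notin X)) /=.
rewrite [X in _ = _ + X]big1 ?addr0 // => u; rewrite negbK => hu.
by rewrite big_pred0 // => v; rewrite noarcX.
Qed.

Lemma sum_swap (g : V -> V -> R) :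
  \sum_u \sum_(v | A u v) g u v = \sum_v \sum_(u | A u v) g u v.
Proof.
under eq_bigr do rewrite big_mkcond.
rewrite exchange_big /=.
by apply: eq_bigr => v _; rewrite [RHS]big_mkcond.
Qed.

Section Flow.
Variables (F qq : V -> V -> R).
Hypothesis hF : is_Lambda A r X qq F.

Lemma fl_arc_ge0 u v : A u v -> 0 <= F u v.
Proof. by case: hF => [[[h _] _] _]; apply: h. Qed.

Lemma fl_node_ge0 u : 0 <= Fnode A X F u.
Proof.
rewrite /Fnode; case: ifP => _; apply: sumr_ge0 => v h; exact: fl_arc_ge0.
Qed.

Lemma fl_r : Fnode A X F r = 1.
Proof. by case: hF => [[_ h] _]. Qed.

Lemma fl_arc u v : A u v -> F u v = Fnode A X F u * qq u v.
Proof. by case: hF => _ h; apply: h. Qed.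

Lemma fl_in u : u != r -> Fnode A X F u = inflow A F u.
Proof.
move=> hr; rewrite /Fnode; case: ifP => // /negbT hX.
by case: hF => [[[_ h] _] _]; apply: h.
Qed.

Lemma inflow_r : inflow A F r = 0.
Proof. by rewrite /inflow big_pred0 // => w; apply/negbTE/(no_in_r src). Qed.

Lemma inflow_le u : u \notin X -> inflow A F u <= Fnode A X F u.
Proof.
move=> hu; case: (eqVneq u r) => [->|hr]; last by rewrite fl_in.
by rewrite inflow_r fl_r ler01.
Qed.

End Flow.

Lemma ch_ge0 v : 0 <= ch v.
Proof.
elim/(dag_ind_down acyc): v => u IH.
case: (boolP (u \in X)) => hu; first by rewrite hchX // hc.
rewrite hchU //; apply: sumr_ge0 => v h; apply: mulr_ge0; last exact: IH.
by case: (hpQD hu) => hp _; apply: hp.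
Qed.

Lemma ch_le u : u \notin X -> ch u <= \sum_(v | A u v) q u v * ch v.
Proof.
move=> hu; have hm := hmin hu (hqQD hu).
have h0 : Div A omega theta kappa u (q u) (q u) = 0.
  by apply: (Div_xx omega kappa th_gt0 th_le1); case: (hqQD hu).
have h1 : 0 <= Div A omega theta kappa u (p u) (q u).
  by apply: (Div_ge0 kap0 om_gt0 th_gt0 th_le1); [case: (hpQD hu) | case: (hqQD hu)].
rewrite hchU //; lra.
Qed.


Local Notation Mtot := (\sum_(u : V) \sum_(v | A u v) omega u v * Num.max 0 (Q u v - P u v)).
Local Notation Ipl u := (\sum_(w | A w u) Num.max 0 (Q w u - P w u)).
Local Notation Jpl u := (\sum_(w | A w u) omega w u * Num.max 0 (Q w u - P w u)).
Local Notation mQ u := (\sum_(v | A u v) omega u v * Num.max 0 (q u v - p u v)).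
Local Notation Dv u f := (Div A omega theta kappa u (theta u) f).

Lemma tau_gt0 : 0 < tau. Proof. by apply: lt_le_trans tau4. Qed.

Lemma mx_ge0 (x : R) : 0 <= Num.max 0 x. Proof. by rewrite le_max lexx. Qed.

Lemma MJ : Mtot = \sum_u Jpl u.
Proof. exact: sum_swap. Qed.

Lemma Jpl_ge0 u : 0 <= Jpl u.
Proof. apply: sumr_ge0 => w h; apply: mulr_ge0; [exact: ltW (om_gt0 h) | exact: mx_ge0]. Qed.

Lemma K1 u v : A u v -> omega u v * Ipl u <= Jpl u / tau.
Proof.
move=> huv; rewrite mulr_sumr mulr_suml; apply: ler_sum => w hw.
have g := geo hw huv.
set m := Num.max 0 _.
have m0 : 0 <= m by exact: mx_ge0.
rewrite ler_pdivlMr; last exact: tau_gt0.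
have -> : omega u v * m * tau = tau * omega u v * m by ring.
by rewrite ler_wpM2r.
Qed.

Lemma K2 u : Num.max 0 (Fnode A X Q u - Fnode A X P u) <= Ipl u.
Proof.
have I0 : 0 <= Ipl u by apply: sumr_ge0 => w _; exact: mx_ge0.
rewrite ge_max I0 /=.
case: (eqVneq u r) => [eu|hr]; first by rewrite eu (fl_r hQ) (fl_r hP) subrr -eu.
rewrite (fl_in hQ hr) (fl_in hP hr) /inflow -sumrB.
by apply: ler_sum => w _; rewrite le_max lexx orbT.
Qed.

Lemma Msplit : Mtot <= \sum_u Fnode A X Q u * mQ u + Mtot / tau.
Proof.
have step : forall u, \sum_(v | A u v) omega u v * Num.max 0 (Q u v - P u v)
                      <= Fnode A X Q u * mQ u + Jpl u / tau.
  move=> u.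
  have hpu : \sum_(v | A u v) p u v <= 1.
    case: (boolP (u \in X)) => hu.
      by rewrite big_pred0 ?ler01 // => v; rewrite noarcX.
    by case: (hpQD hu) => _ ->.
  have hp0 : forall v, A u v -> 0 <= p u v by move=> v h; case: (hpQD (arcX h)) => hh _; apply: hh.
  apply: le_trans (_ : \sum_(v | A u v) (Fnode A X Q u * (omega u v * Num.max 0 (q u v - p u v))
              + p u v * (omega u v * Num.max 0 (Fnode A X Q u - Fnode A X P u))) <= _).
    apply: ler_sum => v h.
    have o0 := om_gt0 h; have Q0 := fl_node_ge0 hQ u; have p0 := hp0 v h.
    have m1 := mx_ge0 (q u v - p u v); have m2 := mx_ge0 (Fnode A X Q u - Fnode A X P u).
    have -> : Fnode A X Q u * (omega u v * Num.max 0 (q u v - p u v)) +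
              p u v * (omega u v * Num.max 0 (Fnode A X Q u - Fnode A X P u)) =
              omega u v * (Fnode A X Q u * Num.max 0 (q u v - p u v) +
                           Num.max 0 (Fnode A X Q u - Fnode A X P u) * p u v) by ring.
    apply: ler_wpM2l; first exact: ltW.
    rewrite (fl_arc hQ h) (fl_arc hP h) ge_max; apply/andP; split.
      by apply: addr_ge0; apply: mulr_ge0.
    have a1 : Fnode A X Q u * (q u v - p u v) <= Fnode A X Q u * Num.max 0 (q u v - p u v).
      by rewrite ler_wpM2l // le_max lexx orbT.
    have a2 : (Fnode A X Q u - Fnode A X P u) * p u v <=
              Num.max 0 (Fnode A X Q u - Fnode A X P u) * p u v.
      by rewrite ler_wpM2r // le_max lexx orbT.
    lra.
  rewrite big_split /= -mulr_sumr lerD2l.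
  apply: le_trans (_ : \sum_(v | A u v) p u v * (Jpl u / tau) <= _).
    apply: ler_sum => v h; apply: ler_wpM2l; first exact: hp0.
    apply: le_trans (K1 h); apply: ler_wpM2l; [exact: ltW (om_gt0 h) | exact: K2].
  rewrite -mulr_suml.
  have J0 : 0 <= Jpl u / tau by rewrite divr_ge0 ?Jpl_ge0 // ltW // tau_gt0.
  have := ler_wpM2r J0 hpu; rewrite mul1r; done.
apply: le_trans (ler_sum _ (fun u _ => step u)) _.
by rewrite big_split /= -mulr_suml -MJ.
Qed.


Lemma Psi_ineq :
  kappa * \sum_(u | u \notin X) Fnode A X Q u * (Dv u (p u) - Dv u (q u))
  <= kappa * (Psi A X omega theta kappa Q q - Psi A X omega theta kappa P p) + 2 * (Mtot / tau).
Proof.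
have E : Psi A X omega theta kappa Q q - Psi A X omega theta kappa P p =
         \sum_(u | u \notin X) (Fnode A X P u * Dv u (p u) - Fnode A X Q u * Dv u (q u)).
  by rewrite /Psi opprK addrC -sumrB.
have per : forall u, u \notin X ->
    Fnode A X Q u * (Dv u (p u) - Dv u (q u)) <=
    (Fnode A X P u * Dv u (p u) - Fnode A X Q u * Dv u (q u)) + 2 / kappa * (Jpl u / tau).
  move=> u hu.
  have [hp0 hps] := hpQD hu.
  have Dp0 : 0 <= Dv u (p u).
    by apply: (Div_ge0 kap0 om_gt0 th_gt0 th_le1) => // v h; apply: ltW; apply: th_gt0.
  have Dle := Div_theta_le kap0 om_gt0 th_gt0 th_le1 hp0.
  have I0 : 0 <= Ipl u by apply: sumr_ge0 => w _; exact: mx_ge0.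
  have a : (Fnode A X Q u - Fnode A X P u) * Dv u (p u) <= Ipl u * Dv u (p u).
    apply: ler_wpM2r => //; apply: le_trans (K2 u); by rewrite le_max lexx orbT.
  have b : Ipl u * Dv u (p u) <= Ipl u * (kappa^-1 * \sum_(v | A u v) omega u v * (theta u v + p u v)).
    by apply: ler_wpM2l.
  have c1 : Ipl u * \sum_(v | A u v) omega u v * (theta u v + p u v) <= 2 * (Jpl u / tau).
    rewrite mulr_sumr.
    apply: le_trans (_ : \sum_(v | A u v) (theta u v + p u v) * (Jpl u / tau) <= _).
      apply: ler_sum => v h.
      have -> : Ipl u * (omega u v * (theta u v + p u v)) = (theta u v + p u v) * (omega u v * Ipl u) by ring.
      apply: ler_wpM2l; last exact: K1.
      by apply: addr_ge0; [apply: ltW; apply: th_gt0 | apply: hp0].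
    by rewrite -mulr_suml big_split /= th_sum // hps.
  have c2 : Ipl u * (kappa^-1 * \sum_(v | A u v) omega u v * (theta u v + p u v))
            = kappa^-1 * (Ipl u * \sum_(v | A u v) omega u v * (theta u v + p u v)) by ring.
  have c3 : kappa^-1 * (Ipl u * \sum_(v | A u v) omega u v * (theta u v + p u v))
            <= kappa^-1 * (2 * (Jpl u / tau)).
    by apply: ler_wpM2l; [rewrite invr_ge0 ltW | exact: c1].
  have c4 : kappa^-1 * (2 * (Jpl u / tau)) = 2 / kappa * (Jpl u / tau) by ring.
  lra.
have S1 : \sum_(u | u \notin X) Fnode A X Q u * (Dv u (p u) - Dv u (q u)) <=
          (Psi A X omega theta kappa Q q - Psi A X omega theta kappa P p) +
          \sum_(u | u \notin X) 2 / kappa * (Jpl u / tau).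
  by rewrite E -big_split /=; apply: ler_sum => u hu; apply: per.
have S2 : \sum_(u | u \notin X) 2 / kappa * (Jpl u / tau) <= 2 / kappa * (Mtot / tau).
  rewrite -mulr_sumr -mulr_suml MJ.
  apply: ler_wpM2l; first by rewrite divr_ge0 // ltW.
  apply: ler_wpM2r; first by rewrite invr_ge0 ltW // tau_gt0.
  rewrite [X in _ <= X](bigID (fun u => u \notin X)) /= lerDl.
  by apply: sumr_ge0 => u _; apply: Jpl_ge0.
have S3 : kappa * (2 / kappa * (Mtot / tau)) = 2 * (Mtot / tau).
  have k0 : kappa != 0 by rewrite gt_eqF.
  have t0 : tau != 0 by rewrite gt_eqF // tau_gt0.
  by field; rewrite ?k0 ?t0.
have := ler_wpM2l (ltW kap0) (le_trans S1 (lerD (lexx _) S2)).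
rewrite mulrDr S3; done.
Qed.

Lemma cost :
  \sum_(u | u \notin X) Fnode A X Q u * \sum_(v | A u v) q u v * (Defs.eta theta u v + 1) * ch v
  <= (2 * (Delta0 A r X)%:R + DeltaI A r X theta) * \sum_(x in X) c x * Fnode A X Q x.
Proof.
set d := dd A r theta.
set B := 2 * (Delta0 A r X)%:R + DeltaI A r X theta.
have sA : \sum_(u | u \notin X) Fnode A X Q u * \sum_(v | A u v) q u v * (Defs.eta theta u v + 1) * ch v
       = \sum_(u | u \notin X) \sum_(v | A u v) Q u v * ((Defs.eta theta u v + 1) * ch v).
  apply: eq_bigr => u _; rewrite mulr_sumr; apply: eq_bigr => v h.
  by rewrite (fl_arc hQ h); ring.
have sB : \sum_(u | u \notin X) \sum_(v | A u v) Q u v * ((Defs.eta theta u v + 1) * ch v)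
       <= \sum_(u | u \notin X) (\sum_(v | A u v) Q u v * d v * ch v
                                  - d u * \sum_(v | A u v) Q u v * ch v).
  apply: ler_sum => u _.
  rewrite mulr_sumr -sumrB; apply: ler_sum => v h.
  have Q0 := fl_arc_ge0 hQ h; have c0 := ch_ge0 v.
  have da := dd_arc acyc src eta1 h.
  have -> : Q u v * d v * ch v - d u * (Q u v * ch v) = Q u v * ((d v - d u) * ch v) by ring.
  apply: ler_wpM2l => //; apply: ler_wpM2r => //; rewrite /d; lra.
have sD : forall u, u \notin X -> d u * (Fnode A X Q u * ch u) <= d u * \sum_(v | A u v) Q u v * ch v.
  move=> u hu; apply: ler_wpM2l; first exact: dd_ge0.
  have -> : \sum_(v | A u v) Q u v * ch v = Fnode A X Q u * \sum_(v | A u v) q u v * ch v.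
    by rewrite mulr_sumr; apply: eq_bigr => v h; rewrite (fl_arc hQ h) mulrA.
  apply: ler_wpM2l; [exact: fl_node_ge0 hQ u | exact: ch_le].
have sE : \sum_(u | u \notin X) \sum_(v | A u v) Q u v * d v * ch v
          = \sum_v d v * ch v * inflow A Q v.
  rewrite sum_nX sum_swap; apply: eq_bigr => v _.
  by rewrite /inflow mulr_sumr; apply: eq_bigr => u _; ring.
have sF : \sum_v d v * ch v * inflow A Q v =
          \sum_(v in X) d v * c v * Fnode A X Q v + \sum_(v | v \notin X) d v * ch v * inflow A Q v.
  rewrite (bigID (fun v => v \in X)) /=; congr (_ + _).
  by apply: eq_bigr => v hv; rewrite hchX // /Fnode hv.
have sG : \sum_(v | v \notin X) d v * ch v * inflow A Q v
          <= \sum_(u | u \notin X) d u * (Fnode A X Q u * ch u).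
  apply: ler_sum => v hv.
  have -> : d v * (Fnode A X Q v * ch v) = d v * ch v * Fnode A X Q v by ring.
  apply: ler_wpM2l; first by apply: mulr_ge0; [exact: dd_ge0 | exact: ch_ge0].
  exact: inflow_le hQ v hv.
have sH : \sum_(v in X) d v * c v * Fnode A X Q v <= B * \sum_(x in X) c x * Fnode A X Q x.
  rewrite mulr_sumr; apply: ler_sum => x hx.
  have -> : d x * c x * Fnode A X Q x = d x * (c x * Fnode A X Q x) by ring.
  apply: ler_wpM2r; first by apply: mulr_ge0; [exact: hc | exact: fl_node_ge0 hQ x].
  rewrite /d /B; exact: (dd_sink r th_gt0 hx).
have sDs : \sum_(u | u \notin X) d u * (Fnode A X Q u * ch u)
           <= \sum_(u | u \notin X) d u * \sum_(v | A u v) Q u v * ch v.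
  by apply: ler_sum => u hu; apply: sD.
rewrite sA; apply: le_trans sB _.
rewrite sumrB sE sF.
lra.
Qed.


Lemma main_ineq :
  (tau - 3) / (kappa * tau) * Mtot
  <= ((2 * (Delta0 A r X)%:R + DeltaI A r X theta) * \sum_(x in X) c x * Fnode A X Q x)
     + Psi A X omega theta kappa Q q - Psi A X omega theta kappa P p.
Proof.
set B := 2 * (Delta0 A r X)%:R + DeltaI A r X theta.
set Cst := \sum_(u | u \notin X) Fnode A X Q u * \sum_(v | A u v) q u v * (Defs.eta theta u v + 1) * ch v.
set SD := \sum_(u | u \notin X) Fnode A X Q u * (Dv u (p u) - Dv u (q u)).
have h1 := Msplit.
have h2 : \sum_u Fnode A X Q u * mQ u = \sum_(u | u \notin X) Fnode A X Q u * mQ u.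
  rewrite [LHS](bigID (fun u => u \notin X)) /= [X in _ + X]big1 ?addr0 // => u.
  rewrite negbK => hu; rewrite big_pred0 ?mulr0 // => v; by rewrite noarcX.
have h3 : \sum_(u | u \notin X) Fnode A X Q u * mQ u <= kappa * SD + kappa * Cst.
  rewrite /SD /Cst !mulr_sumr -big_split; apply: ler_sum => u hu /=.
  have [hp0 hps] := hpQD hu; have [hq0 hqs] := hqQD hu.
  have L := local_ineq kap0 om_gt0 th_gt0 th_le1 hp0 hq0 hps hqs (th_sum hu)
             (fun v _ => ch_ge0 v) (hmin hu).
  have Q0 := fl_node_ge0 hQ u.
  have := ler_wpM2l Q0 L.
  move=> H; apply: le_trans H _.
  rewrite le_eqVlt; apply/orP; left; apply/eqP; ring.
have h4 := Psi_ineq.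
have h5 := cost.
have h6 : kappa * Cst <= kappa * (B * \sum_(x in X) c x * Fnode A X Q x).
  by apply: ler_wpM2l; [exact: ltW | exact: h5].
rewrite -(ler_pM2l kap0).
have k0 : kappa != 0 by rewrite gt_eqF.
have t0 : tau != 0 by rewrite gt_eqF // tau_gt0.
have -> : kappa * ((tau - 3) / (kappa * tau) * Mtot) = Mtot - 3 * (Mtot / tau).
  by field; rewrite ?k0 ?t0.
rewrite -/SD in h4; rewrite -/B -/Cst in h5.
lra.
Qed.

End Main.

Theorem lemma4p13 (R : realType) (V : finType) (A : rel V) (r : V) (X : {set V})
  (omega theta : V -> V -> R) (tau kappa : R)
  (q : V -> V -> R) (c : V -> R) (p Q P : V -> V -> R) :
  is_DAG A r X ->
  is_marked A X omega theta ->
  is_geometric A tau omega ->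
  4 <= tau ->
  0 < kappa ->
  in_QD A X q ->
  (forall x, x \in X -> 0 <= c x) ->
  is_step A X omega theta kappa q c p ->
  is_Lambda A r X q Q ->
  is_Lambda A r X p P ->
  (tau - 3) / (kappa * tau) *
    (\sum_(u : V) \sum_(v | A u v) omega u v * Num.max 0 (Q u v - P u v))
  <= ((2 * (Delta0 A r X)%:R + DeltaI A r X theta) *
        \sum_(x in X) c x * Fnode A X Q x)
     + Psi A X omega theta kappa Q q - Psi A X omega theta kappa P p.
Proof.
move=> [acyc src sinks] [om_gt0 _ th_gt0 th_sum] geo tau4 kap0 hqQD hc
  [hpQD [ch [hchX hchU hmin]]] hQ hP.
exact: (main_ineq acyc src sinks om_gt0 th_gt0 th_sum geo tau4 kap0 hqQD hpQD hc
          hchX hchU hmin hQ hP).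
Qed.
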